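(* For all $\alpha\in(0,\pi/4]$, $\beta_0(\alpha)>t(\alpha)$, where $\beta_0(\alpha)=\tfrac12\arccos\!\left(\frac{-2\cos(4\alpha)+\cos(6\alpha)+2}{3-2\cos(4\alpha)}\right)$ and $t(\alpha)=\arctan\!\left(\frac{\sin(3\alpha)-\sin\alpha}{3\cos\alpha-\cos(3\alpha)}\right)$. *)

(* Defs.v *)
From Stdlib Require Import Reals.
Open Scope R_scope.

Definition beta0 (a : R) : R :=
  / 2 * acos ((- 2 * cos (4 * a) + cos (6 * a) + 2) / (3 - 2 * cos (4 * a))).

Definition t_fun (a : R) : R :=
  atan ((sin (3 * a) - sin a) / (3 * cos a - cos (3 * a))).

(* Main.v *)
Require Import Defs.
From Stdlib Require Import Reals.
From Stdlib Require Import Lra Psatz.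
Open Scope R_scope.

Lemma cos_2atan (u : R) : cos (2 * atan u) = (1 - u^2) / (1 + u^2).
Proof.
  rewrite cos_2a, cos_atan, sin_atan.
  assert (H : 0 < 1 + Rsqr u) by (unfold Rsqr; nra).
  assert (Hs : sqrt (1 + Rsqr u) * sqrt (1 + Rsqr u) = 1 + Rsqr u) by (apply sqrt_sqrt; lra).
  assert (Hp : 0 < sqrt (1 + Rsqr u)) by (apply sqrt_lt_R0; lra).
  replace (1 / sqrt (1 + Rsqr u) * (1 / sqrt (1 + Rsqr u)) - u / sqrt (1 + Rsqr u) * (u / sqrt (1 + Rsqr u)))
    with ((1 - u * u) / (sqrt (1 + Rsqr u) * sqrt (1 + Rsqr u))) by (field; lra).
  rewrite Hs. unfold Rsqr. field. unfold Rsqr in H. lra.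
Qed.

Theorem mainTheorem15 : forall alpha : R,
  0 < alpha <= PI / 4 -> beta0 alpha > t_fun alpha.
Proof.
  intros a [Ha1 Ha2].
  assert (HPI : 0 < PI) by exact PI_RGT_0.
  set (k := cos a). set (s := sin a). set (c := cos (2 * a)).
  assert (Hk : 0 < k) by (apply cos_gt_0; lra).
  assert (Hs : 0 < s) by (apply sin_gt_0; lra).
  assert (Hsk : s * s + k * k = 1) by (pose proof (sin2_cos2 a) as E; unfold Rsqr in E; fold s k in E; lra).
  assert (Hc : c = 2 * k * k - 1) by (unfold c; rewrite cos_2a_cos; reflexivity).
  assert (Hc0 : 0 <= c) by (apply cos_ge_0; lra).
  assert (Hc1 : c < 1) by nra.
  assert (H2s : sin (2 * a) * sin (2 * a) = 1 - c * c).
  { pose proof (sin2_cos2 (2 * a)) as E; unfold Rsqr in E; fold c in E; lra. }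
  assert (H4 : cos (4 * a) = 2 * c * c - 1).
  { replace (4 * a) with (2 * (2 * a)) by ring. rewrite cos_2a_cos. reflexivity. }
  assert (H6 : cos (6 * a) = 4 * c^3 - 3 * c).
  { replace (6 * a) with (2 * (2 * a) + 2 * a) by ring.
    rewrite cos_plus, sin_2a, (cos_2a_cos (2 * a)). fold c.
    replace (2 * sin (2 * a) * c * sin (2 * a)) with (2 * c * (sin (2 * a) * sin (2 * a))) by ring.
    rewrite H2s. ring. }
  assert (H3s : sin (3 * a) - sin a = 2 * s * c).
  { replace (3 * a) with (2 * a + a) by ring.
    rewrite sin_plus, sin_2a. fold c s k. rewrite Hc. nra. }
  assert (H3c : 3 * cos a - cos (3 * a) = 2 * k * (2 - c)).
  { replace (3 * a) with (2 * a + a) by ring.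
    rewrite cos_plus, sin_2a. fold c s k. rewrite Hc. nra. }
  unfold beta0, t_fun. rewrite H4, H6, H3s, H3c.
  set (X := (- 2 * (2 * c * c - 1) + (4 * c ^ 3 - 3 * c) + 2) / (3 - 2 * (2 * c * c - 1))).
  set (u := 2 * s * c / (2 * k * (2 - c))).
  assert (Hu2 : u ^ 2 = (1 - c) * c * c / ((1 + c) * (2 - c) ^ 2)).
  { unfold u.
    assert (E1 : s * s = (1 - c) / 2) by lra.
    assert (E2 : k * k = (1 + c) / 2) by lra.
    replace ((2 * s * c / (2 * k * (2 - c))) ^ 2) with ((s * s) * c * c / ((k * k) * (2 - c) ^ 2)).
    2:{ field. lra. }
    rewrite E1, E2. field. lra. }
  assert (Hcos2t : cos (2 * atan u) = (2 - 2 * c * c + c ^ 3) / (2 - c * c)).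
  { rewrite cos_2atan, Hu2. field. nra. }
  assert (HX : X < (2 - 2 * c * c + c ^ 3) / (2 - c * c)).
  { unfold X. apply (Rmult_lt_reg_r ((3 - 2 * (2 * c * c - 1)) * (2 - c * c))). nra.
    field_simplify; try nra.
    assert (P : 0 < (1 - c) * (2 + 8*c + 2*c^2 - 4*c^3)).
    { apply Rmult_lt_0_compat. lra. nra. }
    nra. }
  assert (HXm : -1 <= X).
  { unfold X. apply (Rmult_le_reg_r (3 - 2 * (2 * c * c - 1))). nra.
    field_simplify; try nra. }
  assert (HX1 : X <= 1).
  { assert ((2 - 2 * c * c + c ^ 3) / (2 - c * c) <= 1).
    { apply (Rmult_le_reg_r (2 - c * c)). nra. field_simplify; try nra. }
    lra. }
  pose proof (acos_bound X) as HB.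
  pose proof (atan_bound u) as HA.
  pose proof (cos_acos X (conj HXm HX1)) as HcX.
  apply Rnot_le_lt. intro Hle.
  assert (Hle2 : acos X <= 2 * atan u) by lra.
  destruct (Rle_lt_or_eq_dec _ _ Hle2) as [Hlt | Heq].
  - pose proof (cos_decreasing_1 (acos X) (2 * atan u)) as D.
    assert (cos (2 * atan u) < cos (acos X)) by (apply D; lra).
    lra.
  - rewrite <- Heq in Hcos2t. lra.
Qed.
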